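(* Let $T$ be a tree on $n>3$ vertices, and suppose $u$ and $v$ are two distinct leaves of $T$ adjacent to the same vertex. Then $$\mathrm{rank}(\mathrm{Max4PC}_T)=\mathrm{rank}(\mathrm{Max4PC}_{T-u})=\mathrm{rank}(\mathrm{Max4PC}_{T-v}).$$
   Context: For a tree $T$ with vertex set $V$, $|V|=n$, let $d_{x,y}$ denote the distance between vertices $x,y$ in $T$. $\mathrm{Max4PC}_T$ is the $\binom{n}{2}\times\binom{n}{2}$ matrix with rows and columns indexed by the $2$-element subsets of $V$, whose entry in row $\{w,x\}$ and column $\{y,z\}$ is $\max\{d_{w,x}+d_{y,z},\ d_{w,y}+d_{x,z},\ d_{w,z}+d_{x,y}\}$. $T-u$ denotes the tree obtained from $T$ by deleting the leaf $u$. A leaf is a vertex of degree $1$. *)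

(* Defs.v *)
From mathcomp Require Import all_boot all_order all_algebra.
Set Implicit Arguments. Unset Strict Implicit. Unset Printing Implicit Defensive.
Import GRing.Theory Num.Theory.

Section Trees.
Variables (V : finType) (e : rel V).

Definition simple_graph : Prop := symmetric e /\ irreflexive e.

(* a tree: simple, connected, with exactly |V| - 1 edges
   (ordered adjacent pairs counted twice) *)
Definition is_tree : Prop :=
  [/\ simple_graph,
      (forall x y : V, connect e x y) &
      #|[set p : V * V | e p.1 p.2]| = 2 * (#|V| - 1)]%N.

Definition leaf (x : V) : bool := #|[set y | e x y]| == 1%N.

Fixpoint ball (k : nat) (x : V) : {set V} :=
  match k with
  | 0 => [set x]
  | k'.+1 => ball k' x :|: [set y | [exists z in ball k' x, e z y]]
  end.

(* graph distance: least k with y in ball k x (correct for connected graphs) *)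
Definition dist (x y : V) : nat :=
  find (fun k => y \in ball k x) (iota 0 #|V|).

Definition pairs : {set {set V}} := [set A : {set V} | #|A| == 2%N].

Definition fst_el (A : {set V}) (d : V) : V := nth d (enum A) 0.
Definition snd_el (A : {set V}) (d : V) : V := nth d (enum A) 1.

Definition max4pc_entry (A B : {set V}) (d : V) : nat :=
  let w := fst_el A d in let x := snd_el A d in
  let y := fst_el B d in let z := snd_el B d in
  maxn (dist w x + dist y z) (maxn (dist w y + dist x z) (dist w z + dist x y)).

(* Max4PC_T as a rational matrix, rows/columns indexed by an enumeration of
   the 2-element subsets (rank is independent of the enumeration) *)
Definition max4pc_mx : 'M[rat]_(#|pairs|) :=
  \matrix_(i < #|pairs|, j < #|pairs|)
    (let A : {set V} := enum_val i in let B : {set V} := enum_val j in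
     match [pick x in A] with
     | Some d => ((max4pc_entry A B d)%:R)%R
     | None => 0%R
     end).

Definition max4pc_rank : nat := \rank max4pc_mx.

End Trees.

Definition del_vertex (V : finType) (e : rel V) (u : V)
  : rel {x : V | x != u} := fun a b => e (val a) (val b).
Arguments del_vertex [V] e u _ _.

(* Main.v *)
Require Import Defs.
From mathcomp Require Import all_boot all_order all_algebra.
From mathcomp Require Import zify ring.
Set Implicit Arguments. Unset Strict Implicit. Unset Printing Implicit Defensive.


Section G.
Variables (V : finType) (e : rel V).

Lemma ball_S k x : ball e k.+1 x = ball e k x :|: [set y | [exists z in ball e k x, e z y]].
Proof. by []. Qed.

Lemma ball_mono k j x : k <= j -> {subset ball e k x <= ball e j x}.
Proof.
move=> /subnKC <-; elim: (j - k) => [|m IH]; first by rewrite addn0.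
by move=> y /IH; rewrite addnS ball_S inE => ->.
Qed.

Lemma ball_edge k x y z : y \in ball e k x -> e y z -> z \in ball e k.+1 x.
Proof.
move=> Hy Hyz; rewrite ball_S !inE; apply/orP; right; apply/existsP; exists y.
by rewrite Hy.
Qed.

Lemma ball0 x y : (y \in ball e 0 x) = (y == x).
Proof. by rewrite /= inE. Qed.

Lemma ballSP k x y : y \in ball e k.+1 x ->
  y \in ball e k x \/ exists2 z, z \in ball e k x & e z y.
Proof.
rewrite ball_S !inE => /orP [->|/existsP [z /andP [Hz Hzy]]]; [by left|right].
by exists z.
Qed.

Lemma ball_trans a b x y z : y \in ball e a x -> z \in ball e b y ->
  z \in ball e (a + b) x.
Proof.
move=> Hy; elim: b z => [|b IH] z.
  by rewrite ball0 addn0 => /eqP ->.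
move=> /ballSP [/IH H|[t /IH Ht Htz]].
  by apply: (ball_mono _ H); lia.
by rewrite addnS; apply: ball_edge Ht Htz.
Qed.

Lemma ball_self k x : x \in ball e k x.
Proof. by apply: (ball_mono (leq0n k)); rewrite ball0. Qed.

Hypothesis esym : symmetric e.

Lemma ball_sym k x y : y \in ball e k x -> x \in ball e k y.
Proof.
elim: k x y => [|k IH] x y.
  by rewrite !ball0 eq_sym.
move=> /ballSP [/IH H|[z /IH Hz Hzy]].
  exact: (ball_mono (leqnSn _)).
have Hz1 : z \in ball e 1 y by apply: (ball_edge (ball_self 0 y)); rewrite esym.
by have := ball_trans Hz1 Hz; rewrite add1n.
Qed.

Lemma ball_stable k x : ball e k x = ball e k.+1 x ->
  forall j, ball e (k + j) x = ball e k x.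
Proof.
move=> Hk; elim=> [|j IH]; first by rewrite addn0.
by rewrite addnS ball_S IH -ball_S.
Qed.

Lemma ball_grow m x : (forall k, k < m -> ball e k x != ball e k.+1 x) ->
  m < #|ball e m x|.
Proof.
elim: m => [|m IH] H.
  by rewrite /= cards1.
have H1 := IH (fun k Hk => H k (ltnW Hk)).
apply: (leq_ltn_trans H1); apply: proper_card; rewrite properEneq H //=.
by apply/subsetP; apply: (ball_mono (leqnSn m)).
Qed.

Lemma ball_all j x : {subset ball e j x <= ball e #|V|.-1 x}.
Proof.
case: (leqP j #|V|.-1) => Hj; first exact: (ball_mono Hj).
case: (boolP [exists k : 'I_#|V|, ball e k x == ball e k.+1 x]).
  move=> /existsP [k /eqP Hk].
  have Hkl : k <= #|V|.-1 by have := ltn_ord k; lia.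
  have := ball_stable Hk (j - k); rewrite subnKC; last by lia.
  move=> Heq y; rewrite Heq; exact: (ball_mono Hkl).
rewrite negb_exists => /forallP H.
have Hc := @ball_grow #|V| x.
have Hm := max_card (mem (ball e #|V| x)).
suff : #|V| < #|ball e #|V| x| by rewrite ltnNge Hm.
apply: Hc => k Hk; exact: (H (Ordinal Hk)).
Qed.

Lemma dist_le k x y : y \in ball e #|V|.-1 x ->
  (dist e x y <= k) = (y \in ball e k x).
Proof.
move=> Hy; rewrite /dist.
set P := fun k => y \in ball e k x.
have Hn : 0 < #|V| by apply/card_gt0P; exists x.
have Hhas : has P (iota 0 #|V|).
  apply/hasP; exists #|V|.-1; last by [].
  by rewrite mem_iota; lia.
have Hi := has_find P (iota 0 #|V|); rewrite Hhas size_iota in Hi.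
have Hf := nth_find 0 Hhas; rewrite nth_iota // add0n in Hf.
apply/idP/idP => H.
  exact: (ball_mono H Hf).
rewrite leqNgt; apply/negP => Hlt.
have := before_find 0 Hlt; rewrite nth_iota; last by lia.
by rewrite add0n => Hb; move: H; rewrite -/(P k) Hb.
Qed.

Lemma path_ball p x : path e x p -> last x p \in ball e (size p) x.
Proof.
elim: p x => [|y p IH] x /=; first by rewrite ball0.
move=> /andP [Hxy /IH H].
have H1 : y \in ball e 1 x by apply: (ball_edge (ball_self 0 x)).
by have := ball_trans H1 H; rewrite add1n.
Qed.

End G.

Lemma anti_le a b : (forall k, (a <= k) = (b <= k)) -> a = b.
Proof.
move=> H; apply/eqP; rewrite eqn_leq -H leqnn /= H leqnn //.
Qed.


Definition conn (V : finType) (e : rel V) := forall x y : V, y \in ball e #|V|.-1 x.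

Lemma tree_conn (V : finType) (e : rel V) : is_tree e -> conn e.
Proof.
case=> _ Hc _ x y; have /connectP [p Hp ->] := Hc x y.
exact: (ball_all (path_ball Hp)).
Qed.

Section M.
Variables (V : finType) (e : rel V).
Hypotheses (esym : symmetric e) (Hc : conn e).

Lemma dist_self x : dist e x x = 0.
Proof. by apply/eqP; rewrite -leqn0 dist_le // ball0. Qed.

Lemma dist_sym x y : dist e x y = dist e y x.
Proof.
apply: anti_le => k; rewrite !dist_le //.
by apply/idP/idP; apply: ball_sym.
Qed.

Lemma dist_ball x y : y \in ball e (dist e x y) x.
Proof. by rewrite -dist_le. Qed.

Lemma dist_tri x y z : dist e x z <= dist e x y + dist e y z.
Proof. by rewrite dist_le //; apply: ball_trans (dist_ball x y) (dist_ball y z). Qed.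

Variables (p w : V).
Hypotheses (Hl : leaf e p) (Hpw : e p w) (Hirr : irreflexive e).

Lemma leaf_nbr y : e p y -> y = w.
Proof.
move=> Hy; move: Hl; rewrite /leaf => /cards1P [z Hz].
have : w \in [set y | e p y] by rewrite inE.
have : y \in [set y | e p y] by rewrite inE.
by rewrite Hz !inE => /eqP -> /eqP ->.
Qed.

Lemma leaf_ball k y : y \in ball e k.+1 p -> y = p \/ y \in ball e k w.
Proof.
elim: k y => [|k IH] y.
  move=> /ballSP [|[z]]; rewrite ball0; first by move/eqP; left.
  by move=> /eqP -> /leaf_nbr ->; right; rewrite ball0.
move=> /ballSP [/IH [->|H]|[z /IH [->|Hz] Hzy]]; first by left.
- by right; apply: (ball_mono (leqnSn k)).
- by right; rewrite (leaf_nbr Hzy); apply: (ball_mono (leq0n _)); rewrite ball0.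
- by right; apply: ball_edge Hz Hzy.
Qed.

Lemma dist_leaf z : z != p -> dist e p z = (dist e w z).+1.
Proof.
move=> Hz.
have Hw1 : w \in ball e 1 p by apply: (ball_edge (ball_self e 0 p)).
case Hd: (dist e p z) => [|m].
  by move: Hd => /eqP; rewrite -leqn0 dist_le // ball0 (negbTE Hz).
congr S; apply: anti_le => k.
rewrite -ltnS -Hd !dist_le //; apply/idP/idP.
  by move=> /leaf_ball [H|//]; rewrite H eqxx in Hz.
by move=> H; have := ball_trans Hw1 H; rewrite add1n.
Qed.

Lemma dist_pw : dist e p w = 1.
Proof.
rewrite dist_leaf ?dist_self //; apply/negP => /eqP H.
by move: Hpw; rewrite H Hirr.
Qed.
End M.

Section Sub.
Variables (V : finType) (e : rel V) (u w : V).
Hypotheses (esym : symmetric e) (Hl : leaf e u) (Huw : e u w) (Hirr : irreflexive e).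
Local Notation V' := {x : V | x != u}.
Local Notation e' := (del_vertex e u).

Lemma sub_ball k (a b : V') : b \in ball e' k a -> val b \in ball e k (val a).
Proof.
elim: k b => [|k IH] b; first by rewrite !ball0 => /eqP ->.
move=> /ballSP [/IH H|[z /IH Hz Hzb]].
  exact: (ball_mono (leqnSn k)).
exact: ball_edge Hz Hzb.
Qed.

Lemma ball_sub k (a b : V') : val b \in ball e k (val a) -> b \in ball e' k a.
Proof.
move: b; elim/ltn_ind: k => k IH b.
case: k IH => [|k] IH.
  by rewrite !ball0 => /eqP /val_inj ->.
move=> /ballSP [H|[z Hz Hzb]].
  by apply: (ball_mono (leqnSn k)); apply: IH.
case: (eqVneq z u) => [Hzu|Hzu].
  subst z.
  have Hbw : val b = w by apply: (leaf_nbr Hl Huw).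
  have Hua : val a != u by apply: (valP a).
  case: k IH Hz => [|k] IH Hz.
    by move: Hz; rewrite ball0 eq_sym (negbTE Hua).
  have := ball_sym esym Hz => /(leaf_ball Hl Huw) [H|H].
    by rewrite H eqxx in Hua.
  have H' := ball_sym esym H; rewrite -Hbw in H'.
  apply: (ball_mono (leqW (leqnSn k))); apply: IH => //; lia.
have Hz' : Sub z Hzu \in ball e' k a by apply: IH => //.
exact: (ball_edge Hz' Hzb).
Qed.

Lemma conn_sub : conn e -> conn e'.
Proof.
move=> Hc a b; apply: ball_all; apply: ball_sub; exact: Hc.
Qed.

Lemma dist_sub : conn e -> forall a b : V', dist e' a b = dist e (val a) (val b).
Proof.
move=> Hc a b; apply: anti_le => k.
rewrite (dist_le _ (conn_sub Hc a b)) (dist_le _ (Hc _ _)).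
by apply/idP/idP; [apply: sub_ball|apply: ball_sub].
Qed.

End Sub.


Section P.
Variables (V : finType) (e : rel V).
Hypothesis dsym : forall x y, dist e x y = dist e y x.
Local Notation d := (dist e).

Definition g x y z t := maxn (d x y + d z t) (maxn (d x z + d y t) (d x t + d y z)).

Lemma g12 x y z t : g x y z t = g y x z t.
Proof. rewrite /g (dsym y x) (dsym y z) (dsym y t) (dsym x z) (dsym x t); lia. Qed.
Lemma g34 x y z t : g x y z t = g x y t z.
Proof. rewrite /g (dsym t z); lia. Qed.

Lemma enum2 (A : {set V}) a b d0 : a != b -> A = [set a; b] ->
  (fst_el A d0 = a /\ snd_el A d0 = b) \/ (fst_el A d0 = b /\ snd_el A d0 = a).
Proof.
move=> Hab HA; rewrite /fst_el /snd_el.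
have Hs : size (enum A) = 2 by rewrite -cardE HA cards2 Hab.
have Hu := enum_uniq (mem A).
have Hm : forall x, (x \in enum A) = (x \in A) by move=> x; rewrite mem_enum.
move: Hs Hu Hm; case: (enum A) => [|s0 [|s1 [|]]] //= _.
rewrite inE andbT => Hne Hm.
have H0 := Hm s0; have H1 := Hm s1.
rewrite !inE eqxx /= HA !inE in H0 H1.
rewrite eq_sym in H1; rewrite eq_sym in H0.
move: H0 H1 => /esym /orP [] /eqP H0 /esym.
  move=> H1; left; split=> //.
  move: H1; rewrite eqxx orbT => /orP [/eqP H1|/eqP H1]; last by [].
  by subst; rewrite eqxx in Hne.
move=> H1; right; split=> //.
move: H1; rewrite eqxx orbT => /orP [/eqP H1|/eqP H1]; first by [].
by subst; rewrite eqxx in Hne.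
Qed.

Lemma entry_pair (A B : {set V}) a b c t d0 : a != b -> A = [set a; b] ->
  c != t -> B = [set c; t] -> max4pc_entry e A B d0 = g a b c t.
Proof.
move=> Hab HA Hct HB; rewrite /max4pc_entry -/(g _ _ _ _).
case: (enum2 d0 Hab HA) => [[-> ->]|[-> ->]];
  case: (enum2 d0 Hct HB) => [[-> ->]|[-> ->]] //.
- by rewrite g34.
- by rewrite g12.
- by rewrite g12 g34.
Qed.

Lemma Mij i j a b c t : enum_val i = [set a; b] -> a != b ->
  enum_val j = [set c; t] -> c != t -> max4pc_mx e i j = ((g a b c t)%:R)%R.
Proof.
move=> Hi Hab Hj Hct; rewrite /max4pc_mx mxE /= Hi Hj.
case: pickP => [x _|H]; first by rewrite (entry_pair _ Hab erefl Hct erefl).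
by have := H a; rewrite !inE eqxx.
Qed.

Lemma pairsP (A : {set V}) : A \in pairs V -> exists a b, a != b /\ A = [set a; b].
Proof. by rewrite inE => /cards2P. Qed.

End P.


Section Q.
Variables (V : finType) (e : rel V).
Hypotheses (esym : symmetric e) (Hc : conn e) (Hirr : irreflexive e).
Variables (p w : V).
Hypotheses (Hl : leaf e p) (Hpw : e p w).
Local Notation d := (dist e).
Let dsym := dist_sym esym Hc.

Lemma wp_neq : w != p.
Proof. by apply/eqP => H; move: Hpw; rewrite H Hirr. Qed.

Lemma gJ0 x y z : x != p -> y != p -> z != p ->
  g e p x y z = (g e w x y z).+1.
Proof.
move=> Hxp Hyp Hzp; rewrite /g !(dist_leaf Hc Hl Hpw) //.
lia.
Qed.

Lemma gJ1 x z : x != p -> z != p ->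
  g e p x p z = (g e w x p z).+1.
Proof.
move=> Hxp Hzp; have Hpw' := wp_neq; rewrite /g (dist_self Hc p) (dsym w p) (dsym x p)
  !(dist_leaf Hc Hl Hpw) // ?(dist_self Hc w) ?(dsym x w).
have := dist_tri Hc x w z; rewrite (dsym x w).
lia.
Qed.

Lemma gJ x y z : x != p -> y != z ->
  g e p x y z = (g e w x y z).+1.
Proof.
move=> Hxp Hyz.
case: (eqVneq y p) => [Hy|Hyp].
  subst y; apply: gJ1 => //; by rewrite eq_sym.
case: (eqVneq z p) => [Hz|Hzp].
  subst z; rewrite (g34 dsym) (g34 dsym w); exact: gJ1.
exact: gJ0.
Qed.

Lemma gK y z : y != z -> g e p w y z = (d w y + d w z).+1.
Proof.
have Hpw' := wp_neq.
have H1 := dist_pw Hc Hl Hpw Hirr.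
move=> Hyz.
case: (eqVneq y p) => [Hy|Hyp].
  subst y; rewrite /g (dist_self Hc p) H1 (dsym w p) H1 !(dist_leaf Hc Hl Hpw) //;
   last by rewrite eq_sym.
  lia.
case: (eqVneq z p) => [Hz|Hzp].
  subst z; rewrite /g (dsym y p) (dist_self Hc p) H1 (dsym w p) H1 !(dist_leaf Hc Hl Hpw) //.
  lia.
rewrite /g H1 !(dist_leaf Hc Hl Hpw) //.
have := dist_tri Hc y w z; rewrite (dsym y w).
lia.
Qed.

End Q.

Import GRing.Theory.
Local Open Scope ring_scope.

Lemma g_sym (V : finType) (e : rel V) (dsym : forall x y, dist e x y = dist e y x)
  a b c t : g e a b c t = g e c t a b.
Proof. rewrite /g (dsym c a) (dsym t b) (dsym c b) (dsym t a); lia. Qed.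

Lemma mx_sym (V : finType) (e : rel V) (dsym : forall x y, dist e x y = dist e y x) :
  (max4pc_mx e)^T = max4pc_mx e.
Proof.
apply/matrixP => i j; rewrite mxE.
have [a [b [Hab Hi]]] := pairsP (enum_valP i).
have [c [t [Hct Hj]]] := pairsP (enum_valP j).
by rewrite (Mij dsym Hj Hct Hi Hab) (Mij dsym Hi Hab Hj Hct) g_sym.
Qed.

Lemma rank_sub (n m : nat) (M : 'M[rat]_n) (M' : 'M[rat]_m) (f : 'I_m -> 'I_n) :
  M^T = M -> mxsub f f M = M' -> (M <= rowsub f M)%MS -> \rank M = \rank M'.
Proof.
move=> Hs <- Hsub.
have HC : forall (k : nat) (A : 'M[rat]_(k, n)), colsub f A = A *m colsub f 1%:M.
  by move=> k A; rewrite mulmx_colsub mulmx1.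
apply/eqP; rewrite eqn_leq; apply/andP; split.
  apply: (leq_trans (mxrankS Hsub)).
  rewrite -mxrank_tr trmx_mxsub Hs.
  apply: mxrankS; rewrite [mxsub f f M]mxsubcr (HC _ M) (HC _ (rowsub f M)).
  exact: submxMr.
rewrite mxsubrc rowsubE; apply: (leq_trans (mxrankM_maxr _ _)).
rewrite (HC _ M); exact: mxrankM_maxl.
Qed.

Lemma row_combo (n : nat) (M : 'M[rat]_n) k k1 k2 k3 :
  (forall j, M k j = M k1 j + (M k2 j + (-1) * M k3 j)) ->
  row k M = row k1 M + (row k2 M + (-1) *: row k3 M).
Proof. by move=> H; apply/rowP => j; rewrite !mxE H. Qed.

Section Key.
Variables (V : finType) (e : rel V) (u v w : V).
Hypotheses (esym : symmetric e) (Hirr : irreflexive e) (Hc : conn e)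
  (Hn : (3 < #|V|)%N) (Huv : u != v) (Hlu : leaf e u) (Hlv : leaf e v)
  (Huw : e u w) (Hvw : e v w).
Local Notation V' := {x : V | x != u}.
Local Notation e' := (del_vertex e u).

Lemma imset_pair (a b : V') : [set val x | x in [set a; b]] = [set val a; val b].
Proof. by rewrite imsetU1 imset_set1. Qed.

Lemma key : \rank (max4pc_mx e) = \rank (max4pc_mx e').
Proof.
have dsym := dist_sym esym Hc.
have dsub := dist_sub esym Hlu Huw Hc.
have dsym' : forall a b : V', dist e' a b = dist e' b a by move=> a b; rewrite !dsub dsym.
have Hwu : w != u by apply/eqP=> H; move: Huw; rewrite H Hirr.
have Hwv : w != v by apply/eqP=> H; move: Hvw; rewrite H Hirr.
have H0 : [set v; w] \in pairs V by rewrite inE cards2 (eq_sym v w) Hwv.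
pose rk := enum_rank_in H0.
have Hrk : forall a b, a != b -> enum_val (rk [set a; b]) = [set a; b].
  by move=> a b Hab; rewrite /rk enum_rankK_in // inE cards2 Hab.
pose f := fun i : 'I_#|pairs V'| => rk [set val x | x in (enum_val i : {set V'})].
have Hf : forall i a b, enum_val i = [set a; b] -> a != b ->
    enum_val (f i) = [set val a; val b].
  by move=> i a b Hi Hab; rewrite /f Hi imset_pair Hrk // val_eqE.
apply: (rank_sub (f := f)).
- exact: mx_sym.
- apply/matrixP => i j; rewrite mxE.
  have [a [b [Hab Hi]]] := pairsP (enum_valP i).
  have [c [t [Hct Hj]]] := pairsP (enum_valP j).
  rewrite (Mij dsym' Hi Hab Hj Hct).
  rewrite (Mij dsym (Hf _ _ _ Hi Hab) _ (Hf _ _ _ Hj Hct)) ?val_eqE //.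
  by rewrite /g !dsub.
have good : forall a b, a != b -> a != u -> b != u ->
    (row (rk [set a; b]) (max4pc_mx e) <= rowsub f (max4pc_mx e))%MS.
  move=> a b Hab Hau Hbu.
  pose a' : V' := Sub a Hau; pose b' : V' := Sub b Hbu.
  have Hab' : a' != b' by rewrite -val_eqE /= .
  have HA' : [set a'; b'] \in pairs V' by rewrite inE cards2 Hab'.
  have -> : rk [set a; b] = f (enum_rank_in HA' [set a'; b']).
    by rewrite /f enum_rankK_in // imset_pair.
  rewrite -row_rowsub; exact: row_sub.
apply/row_subP => k.
have Hk' : k = rk (enum_val k) by rewrite /rk enum_valK_in.
suff Hux : forall x, x != u -> enum_val k = [set u; x] ->
    (row k (max4pc_mx e) <= rowsub f (max4pc_mx e))%MS.
  have [a [b [Hab Hk]]] := pairsP (enum_valP k).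
  case: (eqVneq a u) => [Hau|Hau].
    by apply: (Hux b); [rewrite -Hau eq_sym|rewrite Hk Hau].
  case: (eqVneq b u) => [Hbu|Hbu].
    by apply: (Hux a) => //; rewrite Hk Hbu setUC.
  by rewrite Hk' Hk; apply: good.
move=> x Hxu Hk.
have Hux : u != x by rewrite eq_sym.
case: (eqVneq x w) => [Hxw|Hxw].
  subst x.
  suff -> : row k (max4pc_mx e) = row (rk [set v; w]) (max4pc_mx e).
    by apply: good; rewrite // eq_sym.
  apply/rowP => j; rewrite mxE [RHS]mxE.
  have [c [t [Hct Hj]]] := pairsP (enum_valP j).
  have Hvw' : v != w by rewrite eq_sym.
  rewrite (Mij dsym Hk Hux Hj Hct) (Mij dsym (Hrk _ _ Hvw') Hvw' Hj Hct).
  by rewrite (gK esym Hc Hirr Hlu Huw Hct) (gK esym Hc Hirr Hlv Hvw Hct).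
have [y0 Hy0] : exists y0, [&& y0 != u, y0 != v & y0 != w].
  case: (pickP (fun y => [&& y != u, y != v & y != w])) => [y0 H|H].
    by exists y0.
  exfalso.
  have Hs : [set: V] \subset [:: u; v; w].
    apply/subsetP => y _; have := H y; rewrite !inE.
    by case: (y == u); case: (y == v); case: (y == w).
  have := subset_leq_card Hs; rewrite cardsT.
  have := card_size [:: u; v; w].
  move=> /= H1 H2; move: Hn; rewrite ltnNge; move/negP; apply; exact: (leq_trans H2 H1).
move: Hy0 => /and3P [Hy0u Hy0v Hy0w].
have Hy0v' : v != y0 by rewrite eq_sym.
have Hy0w' : w != y0 by rewrite eq_sym.
have Hwx : w != x by rewrite eq_sym.
suff -> : row k (max4pc_mx e) = row (rk [set w; x]) (max4pc_mx e) +
    (row (rk [set v; y0]) (max4pc_mx e) + (-1) *: row (rk [set w; y0]) (max4pc_mx e)).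
  apply: addmx_sub; first exact: good.
  apply: addmx_sub; first by apply: good; rewrite // eq_sym.
  by apply: scalemx_sub; apply: good.
apply: row_combo => j.
have [c [t [Hct Hj]]] := pairsP (enum_valP j).
rewrite (Mij dsym Hk Hux Hj Hct) (Mij dsym (Hrk _ _ Hwx) Hwx Hj Hct).
rewrite (Mij dsym (Hrk _ _ Hy0v') Hy0v' Hj Hct) (Mij dsym (Hrk _ _ Hy0w') Hy0w' Hj Hct).
rewrite (gJ esym Hc Hirr Hlu Huw Hxu Hct) (gJ esym Hc Hirr Hlv Hvw Hy0v Hct).
move: (g e w x c t) (g e w y0 c t) => m1 m2.
by rewrite -(addn1 m1) -(addn1 m2) !natrD mulN1r addrAC subrr add0r.
Qed.
End Key.


Close Scope ring_scope.

Theorem mainTheorem5 (V : finType) (e : rel V) (u v : V) :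
  is_tree e -> (3 < #|V|)%N -> u != v -> leaf e u -> leaf e v ->
  (exists w : V, e u w && e v w) ->
  max4pc_rank e = max4pc_rank (del_vertex e u) /\
  max4pc_rank (del_vertex e u) = max4pc_rank (del_vertex e v).
Proof.
move=> Ht Hn Huv Hlu Hlv [w /andP [Huw Hvw]].
have Hc := tree_conn Ht.
case: Ht => [[esym Hirr] _ _].
have Hvu : v != u by rewrite eq_sym.
rewrite /max4pc_rank.
rewrite -(key esym Hirr Hc Hn Huv Hlu Hlv Huw Hvw).
by rewrite -(key esym Hirr Hc Hn Hvu Hlv Hlu Hvw Huw).
Qed.
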